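(* Let $G$ be a finite loopless multigraph, let $\vec G$ be an orientation of $G$, let $a$ be a positive integer and let $\mathfrak f$ be a fraternal completion of $\vec G$ of depth $a$. Let $c:E(\vec G)\to[N]$ be a colouring of the edges such that $c(e_1)\ne c(e_2)$ for every conflict $(e_1,e_2)$ with $e_1\ne e_2$. Then every cycle $\gamma$ of $G$ receives at least $\min(|\gamma|,a+1)$ distinct colours.
   Context: Let $\vec G$ be a finite loopless directed multigraph and $a$ a positive integer. A fraternal completion of $\vec G$ of depth $a$ is a triple $\mathfrak f=((E_1,\dots,E_a),w,\kappa)$ such that: $E_1=E(\vec G)$; for $2\le i\le a$, $E_i$ is the arc set of a directed multigraph with vertex set $V(\vec G)$; the sets $E_1,\dots,E_a$ are pairwise disjoint (distinct arcs may have the same head and tail); writing $E_{\mathfrak f}=\bigcup_{1\le i\le a}E_i$, the weight $w(e)$ of $e\in E_{\mathfrak f}$ is the $i$ with $e\in E_i$; $\kappa$ maps each $e\in\bigcup_{1<i\le a}E_i$ to a pair $(f,g)\in E_{\mathfrak f}^2$ with ${\rm tail}(f)\ne{\rm tail}(g)$, $w(e)=w(f)+w(g)$, ${\rm tail}(e)={\rm tail}(f)$, ${\rm head}(e)={\rm tail}(g)$, ${\rm head}(f)={\rm head}(g)$; and conversely, for all $i,j$ with $i+j\le a$ and all $f\in E_i$, $g\in E_j$ with ${\rm tail}(f)\ne{\rm tail}(g)$ and ${\rm head}(f)={\rm head}(g)$, there is a unique $e\in E_{i+j}$ with $\kappa(e)\in\{(f,g),(g,f)\}$. Let $\prec$ be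 the partial order on $E_{\mathfrak f}$ obtained as the transitive closure of the relations $f\prec e$ and $g\prec e$ whenever $\kappa(e)=(f,g)$; $f\preceq e$ means $f\prec e$ or $f=e$. Let $\vec H_{\le a}$ be the directed multigraph with vertex set $V(\vec G)$ and arc set $E_{\mathfrak f}$. A pair $(e_1,e_2)$ of arcs of $\vec G$ is a conflict if there exist $f_1,f_2\in E_{\mathfrak f}$ with $f_1\succeq e_1$, $f_2\succeq e_2$, and a directed path of length at most $a$ in $\vec H_{\le a}$ whose first arc is $f_1$ and which ends at an endpoint of $f_2$ (possibly $f_1=f_2$). Cycles of $G$ include $2$-cycles formed by parallel edges; $|\gamma|$ is the number of edges of $\gamma$. *)

(* Defs.v *)
From mathcomp Require Import all_boot.

(* A finite loopless directed multigraph  ~G  is given by a finite vertex type V,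
   a finite arc type E and tail/head maps tl hd : E -> V (looplessness is a
   hypothesis tl e != hd e).  The underlying undirected multigraph G has the same
   edges, an edge e joining tl e and hd e.

   A fraternal completion of depth a is encoded by a finite type X of the new
   arcs (the union of E_2, ..., E_a), with tail/head maps tlX hdX, weights wX and
   the map kap (kappa).  The full arc set E_f is the disjoint sum E + X; the arcs
   of E (= E_1) have weight 1.  *)

Section Fraternal.
Variables (V E X : finType) (tl hd : E -> V) (tlX hdX : X -> V)
          (wX : X -> nat) (kap : X -> ((E + X) * (E + X))%type).

Definition Arc : finType := (E + X)%type.

Definition tailA (f : Arc) : V := match f with inl e => tl e | inr x => tlX x end.
Definition headA (f : Arc) : V := match f with inl e => hd e | inr x => hdX x end.
Definition wA (f : Arc) : nat := match f with inl _ => 1 | inr x => wX x end.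

Definition is_fraternal_completion (a : nat) : Prop :=
  (forall x : X, 2 <= wX x <= a) /\
  (forall x : X,
     let f := (kap x).1 in let g := (kap x).2 in
     [/\ tailA f != tailA g, wX x = wA f + wA g, tlX x = tailA f,
         hdX x = tailA g & headA f = headA g]) /\
  (forall f g : Arc, wA f + wA g <= a -> tailA f != tailA g ->
     headA f = headA g ->
     exists! x : X, kap x = (f, g) \/ kap x = (g, f)).

Definition childrel : rel Arc :=
  fun c p => match p with
             | inl _ => false
             | inr x => (c == (kap x).1) || (c == (kap x).2)
             end.

Definition preceq (f e : Arc) : bool := connect childrel f e.

Definition arc_adj : rel Arc := fun f g => headA f == tailA g.

(* f1 :: s is a directed path (distinct vertices) in H_{<=a} of length at most a,
   starting with the arc f1, ending at vertex v *)
Definition dpath_from_to (a : nat) (f1 : Arc) (s : seq Arc) (v : V) : Prop :=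
  [/\ path arc_adj f1 s,
      uniq (tailA f1 :: headA f1 :: map headA s),
      size (f1 :: s) <= a &
      last (headA f1) (map headA s) = v].

Definition conflict (a : nat) (e1 e2 : E) : Prop :=
  exists (f1 f2 : Arc) (s : seq Arc),
    [/\ preceq (inl e1) f1, preceq (inl e2) f2 &
        (dpath_from_to a f1 s (tailA f2) \/ dpath_from_to a f1 s (headA f2))].

End Fraternal.

Section Cycles.
Variables (V E : finType) (tl hd : E -> V).

Definition joins (e : E) (u v : V) : bool :=
  ((tl e == u) && (hd e == v)) || ((tl e == v) && (hd e == u)).

(* vs = [v_0; ...; v_{k-1}], es = [e_0; ...; e_{k-1}], k >= 2, all distinct,
   e_i joins v_i and v_{i+1 mod k}.  (k = 2: two distinct parallel edges.) *)
Definition is_cycle (vs : seq V) (es : seq E) : Prop :=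
  [/\ 2 <= size es, size vs = size es, uniq vs, uniq es &
      all (fun t => joins t.1 t.2.1 t.2.2) (zip es (zip vs (rot 1 vs)))].

End Cycles.

(* Main.v *)
Require Import Defs.
From mathcomp Require Import all_boot zify.
Set Warnings "-notation-overridden".

Lemma zip_drop (S T : Type) (s : seq S) (t : seq T) n :
  zip (drop n s) (drop n t) = drop n (zip s t).
Proof.
elim: s t n => [|x s IH] [|y t] [|n] //=; try by case: (drop _ _).
Qed.

Lemma zip_take (S T : Type) (s : seq S) (t : seq T) n :
  zip (take n s) (take n t) = take n (zip s t).
Proof. by elim: s t n => [|x s IH] [|y t] [|n] //=; rewrite IH. Qed.

Lemma rot_zip (S T : Type) (s : seq S) (t : seq T) n :
  size s = size t -> zip (rot n s) (rot n t) = rot n (zip s t).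
Proof.
move=> st; rewrite /rot zip_cat ?size_drop ?st // zip_drop zip_take //.
Qed.

Lemma zip_map2 (S T U : Type) (f : S -> T) (g : S -> U) (s : seq S) :
  zip (map f s) (map g s) = map (fun x => (f x, g x)) s.
Proof. by elim: s => //= x s ->. Qed.

Lemma flatten_single (S T : Type) (g : S -> T) (s : seq S) :
  flatten (map (fun x => [:: g x]) s) = map g s.
Proof. by elim: s => //= x s ->. Qed.

Lemma perm_flatten_rot (T : eqType) (ss : seq (seq T)) n :
  perm_eq (flatten (rot n ss)) (flatten ss).
Proof. by apply: perm_flatten; rewrite perm_rot. Qed.

Lemma perm_flatten_rev (T : eqType) (ss : seq (seq T)) :
  perm_eq (flatten (rev ss)) (flatten ss).
Proof. by apply: perm_flatten; rewrite perm_rev. Qed.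

Lemma bool_rot (s : seq bool) : true \in s -> false \in s ->
  exists n0 n1 q, rot n1 (rot n0 s) = [:: true, false & q].
Proof.
move=> /splitPr [s1 s2] Hf.
exists (size s1).
have -> : rot (size s1) (s1 ++ true :: s2) = true :: (s2 ++ s1) by rewrite rot_size_cat.
have : false \in s2 ++ s1.
  move: Hf; rewrite !mem_cat in_cons /=; by case/orP=> ->; rewrite ?orbT.
move: (s2 ++ s1) => t.
suff H : false \in t -> exists p q, true :: t = p ++ [:: true, false & q].
  move=> /H [p [q ->]].
  by exists (size p), (q ++ p); rewrite rot_size_cat.
elim: t => [//|b t IH]; rewrite in_cons; case: b => /=.
  move=> /IH [p [q Ht]]; exists (true :: p), q; by rewrite Ht.
by move=> _; exists [::], t.
Qed.

Lemma blk (T : eqType) (Ss : seq (seq T)) m e : all (fun S => 0 < size S) Ss ->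
  e \in take m (flatten Ss) ->
  exists j, [/\ j < m, j < size Ss & e \in nth [::] Ss j].
Proof.
elim: Ss m => [|S Ss IH] m /=; first by [].
case/andP=> HS Hall; rewrite take_cat.
case: ltnP => Hm.
  move=> He; exists 0; split => //; last by apply: mem_take He.
  by case: m Hm He => [|m]; rewrite ?take0.
rewrite mem_cat => /orP [He|He].
  by exists 0; split => //; apply: leq_trans HS Hm.
have [j [Hj1 Hj2 Hj3]] := IH _ Hall He.
exists j.+1; split => //.
by lia.
Qed.

Lemma all_rot (T : Type) (p : pred T) n (s : seq T) : all p (rot n s) = all p s.
Proof. by rewrite /rot all_cat andbC -all_cat cat_take_drop. Qed.

Lemma map_snd_zip (S T : Type) (s : seq S) (t : seq T) : size s = size t -> map snd (zip s t) = t.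
Proof. by elim: s t => [|x s IH] [|y t] //= [] /IH ->. Qed.

Lemma map_fst_zip (S T : Type) (s : seq S) (t : seq T) : size s = size t -> map fst (zip s t) = s.
Proof. by elim: s t => [|x s IH] [|y t] //= [] /IH ->. Qed.
Section Main.
Variables (V E X : finType) (tl hd : E -> V) (tlX hdX : X -> V) (wX : X -> nat)
  (kap : X -> ((E + X) * (E + X))%type) (a : nat).
Hypothesis Ha : 0 < a.

Local Notation Arc := (Defs.Arc E X).
Local Notation tA := (tailA V E X tl tlX).
Local Notation hA := (headA V E X hd hdX).
Local Notation wt := (wA E X wX).
Local Notation prec := (preceq E X kap).
Local Notation conf := (conflict V E X tl hd tlX hdX kap a).
Local Notation adj := (arc_adj V E X tl hd tlX hdX).
Local Notation dp := (dpath_from_to V E X tl hd tlX hdX a).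

Lemma dp_nil (f : Arc) : tA f != hA f -> dp f [::] (hA f).
Proof. by move=> H; split => //=; rewrite ?inE ?H. Qed.

Lemma conf_head e1 e2 (f1 f2 : Arc) : prec (inl e1) f1 -> prec (inl e2) f2 ->
  tA f1 != hA f1 -> hA f1 = hA f2 -> conf e1 e2.
Proof.
move=> P1 P2 H Hh; exists f1, f2, [::]; split => //; right.
by rewrite -Hh; apply: dp_nil.
Qed.

Lemma lin (gs : seq Arc) (g0 : Arc) j : path adj g0 gs -> j < size gs ->
  tA g0 :: hA g0 :: map hA (take j gs) = take j.+2 (map tA (g0 :: gs)) /\
  last (hA g0) (map hA (take j gs)) = tA (nth g0 gs j).
Proof.
elim: gs g0 j => [//|g1 gs IH] g0 [|j] /= /andP [/eqP H01 Hp] Hj.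
  by rewrite take0 /= H01.
have [E1 E2] := IH g1 j Hp Hj.
rewrite E2 (set_nth_default g1 g0 Hj); split=> //.
by rewrite H01 E1.
Qed.

Lemma dp_chain (gs : seq Arc) (g0 : Arc) i j : path adj g0 gs ->
  uniq (map tA (g0 :: gs)) -> i < j <= size gs -> j - i <= a ->
  exists s, dp (nth g0 (g0 :: gs) i) s (tA (nth g0 (g0 :: gs) j)).
Proof.
elim: i g0 gs j => [|i IH] g0 gs j Hp Hu.
  case: j => [//|j] /andP [_ Hj] Ha'.
  exists (take j gs).
  have [E1 E2] := lin gs g0 j Hp Hj.
  split.
  - by move: Hp; rewrite -{1}(cat_take_drop j gs) cat_path => /andP [].
  - by rewrite E1 take_uniq.
  - by rewrite /= size_takel ?(ltnW Hj) // subn0 in Ha' *.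
  - by rewrite E2.
case: gs Hp Hu => [|g1 gs] Hp Hu; first by case: j => [|j] /andP [] //.
case: j => [//|j] Hij Ha'.
move: Hp => /= /andP [_ Hp].
have Hu' : uniq (map tA (g1 :: gs)) by move: Hu => /= /andP [].
have Hij' : i < j <= size gs by [].
have [s Hs] := IH g1 gs j Hp Hu' Hij' Ha'.
exists s.
have Hj1 : j < size (g1 :: gs) by case/andP: Hij'.
have Hi1 : i < size (g1 :: gs) by case/andP: Hij' => /ltnW /leq_trans; apply.
by rewrite /= (set_nth_default g1 g0 Hi1) (set_nth_default g1 g0 Hj1).
Qed.

Definition Block := (Arc * seq E * V)%type.
Definition bg (b : Block) : Arc := b.1.1.
Definition bS (b : Block) : seq E := b.1.2.
Definition bu (b : Block) : V := b.2.

Lemma rcons_path (gs : seq Arc) (g0 : Arc) z :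
  map hA (g0 :: gs) = rcons (map tA gs) z -> path adj g0 gs.
Proof.
elim: gs g0 => [//|g1 gs IH] g0 /= [H1 H2].
by rewrite /arc_adj H1 eqxx /=; apply: IH; rewrite /= H2.
Qed.

Lemma chain (rep : seq Block) m : 0 < size rep ->
  map hA (map bg rep) = rot 1 (map tA (map bg rep)) ->
  uniq (map tA (map bg rep)) ->
  (forall b, b \in rep -> [/\ tA (bg b) != hA (bg b), 0 < size (bS b) &
                             forall e, e \in bS b -> prec (inl e) (bg b)]) ->
  m <= a.+1 ->
  forall e e', e \in take m (flatten (map bS rep)) ->
               e' \in take m (flatten (map bS rep)) -> conf e e' \/ conf e' e.
Proof.
case: rep => [//|b0 rep'] _ Hh Hu Hb Hm.
set rep := b0 :: rep'.
have Hp : path adj (bg b0) (map bg rep') by apply: (@rcons_path _ _ (tA (bg b0))); rewrite Hh /= rot1_cons.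
have Hall : all (fun S => 0 < size S) (map bS rep).
  by apply/allP => S /mapP [b Hb' ->]; have [] := Hb b Hb'.
have key : forall i, i < size rep -> forall e, e \in nth [::] (map bS rep) i ->
   prec (inl e) (nth (bg b0) (bg b0 :: map bg rep') i) /\
       tA (nth (bg b0) (bg b0 :: map bg rep') i) != hA (nth (bg b0) (bg b0 :: map bg rep') i).
  move=> i Hi e He.
  have E1 : nth (bg b0) (bg b0 :: map bg rep') i = bg (nth b0 rep i).
    by rewrite -(nth_map b0 (bg b0) bg Hi).
  move: He; rewrite (nth_map b0 [::] bS Hi) E1 => He.
  have [H1 H2 H3] := Hb _ (mem_nth b0 Hi).
  by split => //; apply: H3.
move=> e e' He He'.
have [i [Hi1 Hi2 Hi3]] := @blk _ _ _ _ Hall He.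
have [j [Hj1 Hj2 Hj3]] := @blk _ _ _ _ Hall He'.
rewrite size_map in Hi2 Hj2.
have [Pi Ti] := key i Hi2 e Hi3.
have [Pj Tj] := key j Hj2 e' Hj3.
have Hu' : uniq (map tA (bg b0 :: map bg rep')) by [].
case: (ltngtP i j) => Hij.
- left.
  have H3 : i < j <= size (map bg rep') by rewrite Hij /= size_map -ltnS.
  have H4 : j - i <= a by lia.
  have [s Hs] := @dp_chain (map bg rep') (bg b0) i j Hp Hu' H3 H4.
  by exists (nth (bg b0) (bg b0 :: map bg rep') i), (nth (bg b0) (bg b0 :: map bg rep') j), s; split => //; left.
- right.
  have H3 : j < i <= size (map bg rep') by rewrite Hij /= size_map -ltnS.
  have H4 : i - j <= a by lia.
  have [s Hs] := @dp_chain (map bg rep') (bg b0) j i Hp Hu' H3 H4.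
  by exists (nth (bg b0) (bg b0 :: map bg rep') j), (nth (bg b0) (bg b0 :: map bg rep') i), s; split => //; left.
- left; subst j.
  exact: (@conf_head e e' _ _ Pi Pj Ti erefl).
Qed.

Definition link (g : Arc) (u v : V) :=
  ((tA g == u) && (hA g == v)) || ((tA g == v) && (hA g == u)).
Definition lk (p : Block * V) := link (bg p.1) (bu p.1) p.2 && (bu p.1 != p.2).
Definition zp (rep : seq Block) := zip rep (rot 1 (map bu rep)).
Definition fw (p : Block * V) := hA (bg p.1) == p.2.
Definition blockok (b : Block) :=
  (wt (bg b) == size (bS b)) && all (fun e => prec (inl e) (bg b)) (bS b).
Definition valid (es : seq E) (rep : seq Block) :=
  [/\ 1 < size rep, uniq (map bu rep), all lk (zp rep), all blockok rep
    & perm_eq (flatten (map bS rep)) es].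
Definition Goal (es : seq E) := exists L, [/\ uniq L, {subset L <= es},
  minn (size es) a.+1 <= size L &
  forall e e', e \in L -> e' \in L -> conf e e' \/ conf e' e].

Lemma zp_rot n rep : zp (rot n rep) = rot n (zp rep).
Proof. by rewrite /zp map_rot rot_rot rot_zip // size_rot size_map. Qed.

Lemma valid_rot es rep n : valid es rep -> valid es (rot n rep).
Proof.
case=> H1 H2 H3 H4 H5; split.
- by rewrite size_rot.
- by rewrite map_rot rot_uniq.
- by rewrite zp_rot all_rot.
- by rewrite all_rot.
- by rewrite map_rot (perm_trans (perm_flatten_rot _ _ _)).
Qed.

Lemma lk_fw b v : lk (b, v) -> hA (bg b) == v -> [/\ tA (bg b) = bu b, hA (bg b) = v & bu b != v].
Proof.
rewrite /lk /link /= => /andP [/orP [/andP [/eqP -> /eqP ->]|/andP [/eqP -> /eqP ->]] Hn] //.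
by move=> /eqP E1; rewrite E1 eqxx in Hn.
Qed.

Lemma lk_bw b v : lk (b, v) -> hA (bg b) != v -> [/\ tA (bg b) = v, hA (bg b) = bu b & bu b != v].
Proof.
rewrite /lk /link /= => /andP [/orP [/andP [/eqP -> /eqP ->]|/andP [/eqP -> /eqP ->]] Hn] //.
by rewrite eqxx.
Qed.

Lemma in_zp b rep : b \in rep -> exists v, (b, v) \in zp rep.
Proof.
move=> Hb; set i := index b rep.
have Hi : i < size rep by rewrite index_mem.
exists (nth (bu b) (rot 1 (map bu rep)) i).
have Hs : size rep = size (rot 1 (map bu rep)) by rewrite size_rot size_map.
rewrite -{1}(nth_index b Hb) -nth_zip //.
by apply: mem_nth; rewrite size_zip -Hs minnn.
Qed.

Lemma zp1 (T : Type) (f : Block -> T) rep : map (fun p => f p.1) (zp rep) = map f rep.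
Proof.
rewrite /zp.
have Hs : size rep <= size (rot 1 (map bu rep)) by rewrite size_rot size_map.
by rewrite -[in RHS](unzip1_zip Hs) /unzip1 -map_comp.
Qed.

Lemma zp2 rep : map snd (zp rep) = rot 1 (map bu rep).
Proof.
rewrite /zp.
have Hs : size (rot 1 (map bu rep)) <= size rep by rewrite size_rot size_map.
by rewrite -[RHS](unzip2_zip Hs).
Qed.

Lemma goalL es L0 : uniq L0 -> {subset L0 <= es} -> minn (size es) a.+1 <= size L0 ->
  (forall e e', e \in take (minn (size es) a.+1) L0 -> e' \in take (minn (size es) a.+1) L0 ->
     conf e e' \/ conf e' e) -> Goal es.
Proof.
move=> Hu Hs Hm Hp; exists (take (minn (size es) a.+1) L0); split => //.
- by rewrite take_uniq.
- by move=> x /mem_take /Hs.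
- by rewrite size_takel.
Qed.

Lemma clique2 (L : seq E) u :
  (forall e, e \in L -> exists f, [/\ prec (inl e) f, tA f != hA f & hA f = u]) ->
  forall e e', e \in L -> e' \in L -> conf e e' \/ conf e' e.
Proof.
move=> H e e' /H [f [P1 T1 H1]] /H [f' [P2 T2 H2]]; left.
by apply: (@conf_head e e' f f' P1 P2 T1); rewrite H1 H2.
Qed.


Hypothesis Hw : forall x, 0 < wX x.

Lemma wt_pos (g : Arc) : 0 < wt g.
Proof. by case: g => //= x; apply: Hw. Qed.

Lemma blockinfo es rep b : valid es rep -> b \in rep ->
  0 < size (bS b) /\ forall e, e \in bS b -> prec (inl e) (bg b).
Proof.
case=> _ _ _ /allP H4 _ /H4 /andP [/eqP Hw' /allP Hp]; split => //.
by rewrite -Hw' wt_pos.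
Qed.

Lemma forward es rep : uniq es -> valid es rep -> all fw (zp rep) -> Goal es.
Proof.
move=> Hues Hv Hf; have [H1 H2 /allP H3 H4 H5] := Hv.
move/allP: Hf => Hf.
have Et : map tA (map bg rep) = map bu rep.
  rewrite -map_comp -(zp1 _ (tA \o bg)) -(zp1 _ bu).
  apply/eq_in_map => p Hp /=.
  by case: p Hp => b v Hp; have [] := lk_fw _ _ (H3 _ Hp) (Hf _ Hp).
have Eh : map hA (map bg rep) = rot 1 (map bu rep).
  rewrite -map_comp -(zp1 _ (hA \o bg)) -zp2.
  apply/eq_in_map => p Hp /=.
  by case: p Hp => b v Hp; have [] := lk_fw _ _ (H3 _ Hp) (Hf _ Hp).
apply: (@goalL es (flatten (map bS rep))).
- by rewrite (perm_uniq H5).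
- by move=> x; rewrite (perm_mem H5).
- by rewrite (perm_size H5) geq_minl.
move=> e e'; apply: chain.
- by apply: ltnW.
- by rewrite Eh Et.
- by rewrite Et.
- move=> b Hb; have [v Hbv] := in_zp _ _ Hb.
  have [T1 T2 T3] := lk_fw _ _ (H3 _ Hbv) (Hf _ Hbv).
  have [B1 B2] := blockinfo _ _ _ Hv Hb.
  by split => //; rewrite T1 T2.
- by rewrite geq_minr.
Qed.

Lemma backward es rep : uniq es -> valid es rep -> all (fun p => ~~ fw p) (zp rep) -> Goal es.
Proof.
move=> Hues Hv Hf; have [H1 H2 /allP H3 H4 H5] := Hv.
move/allP: Hf => Hf.
have Et : map tA (map bg rep) = rot 1 (map bu rep).
  rewrite -map_comp -(zp1 _ (tA \o bg)) -zp2.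
  apply/eq_in_map => p Hp /=.
  by case: p Hp => b v Hp; have [] := lk_bw _ _ (H3 _ Hp) (Hf _ Hp).
have Eh : map hA (map bg rep) = map bu rep.
  rewrite -map_comp -(zp1 _ (hA \o bg)) -(zp1 _ bu).
  apply/eq_in_map => p Hp /=.
  by case: p Hp => b v Hp; have [] := lk_bw _ _ (H3 _ Hp) (Hf _ Hp).
have Hp5 : perm_eq (flatten (map bS (rev rep))) es.
  by rewrite map_rev (perm_trans (perm_flatten_rev _ _)).
apply: (@goalL es (flatten (map bS (rev rep)))).
- by rewrite (perm_uniq Hp5).
- by move=> x; rewrite (perm_mem Hp5).
- by rewrite (perm_size Hp5) geq_minl.
move=> e e'; apply: chain.
- by rewrite size_rev; apply: ltnW.
- by rewrite !map_rev Eh Et rev_rot rotrK.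
- by rewrite !map_rev Et rev_uniq rot_uniq.
- move=> b; rewrite mem_rev => Hb; have [v Hbv] := in_zp _ _ Hb.
  have [T1 T2 T3] := lk_bw _ _ (H3 _ Hbv) (Hf _ Hbv).
  have [B1 B2] := blockinfo _ _ _ Hv Hb.
  by split => //; rewrite T1 T2 eq_sym.
- by rewrite geq_minr.
Qed.


Hypothesis Hkap : forall x : X,
  [/\ tA (kap x).1 != tA (kap x).2, wX x = wt (kap x).1 + wt (kap x).2,
      tlX x = tA (kap x).1, hdX x = tA (kap x).2 & hA (kap x).1 = hA (kap x).2].
Hypothesis Hconv : forall f g : Arc, wt f + wt g <= a -> tA f != tA g ->
  hA f = hA g -> exists! x : X, kap x = (f, g) \/ kap x = (g, f).

Lemma sink es rep q : uniq es -> valid es rep -> map fw (zp rep) = [:: true, false & q] ->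
  Goal es \/ exists rep', valid es rep' /\ size rep' < size rep.
Proof.
move=> Hues Hv; have [H1 H2 H3 H4 H5] := Hv.
case: rep Hv H1 H2 H3 H4 H5 => [|b0 [|b1 rest]] // Hv _ H2 H3 H4 H5.
set u0 := bu b0; set u1 := bu b1.
set nx := head u0 (map bu rest).
have Ezp : zp [:: b0, b1 & rest] = [:: (b0, u1), (b1, nx) &
              behead (zip (b1 :: rest) (rcons (map bu rest) u0))].
  rewrite /zp /= -cats1 /nx /u0 /u1; by case: rest {Hv H2 H3 H4 H5 nx}.
rewrite Ezp /= => [[F0 F1 _]].
move: H3; rewrite Ezp /= => /and3P [L0 L1 Lr].
have [T0 E0 N0] := lk_fw _ _ L0 F0.
have [T1 E1 N1] := lk_bw _ _ L1 (negbT F1).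
have Hb : forall b, b \in [:: b0, b1 & rest] -> 0 < size (bS b) /\ forall e, e \in bS b -> prec (inl e) (bg b).
  by move=> b Hb; apply: (blockinfo _ _ _ Hv Hb).
have [_ P0] := Hb b0 (mem_head _ _).
have [_ P1] : 0 < size (bS b1) /\ forall e, e \in bS b1 -> prec (inl e) (bg b1).
  by apply: Hb; rewrite !inE eqxx orbT.
have Hu01 : uniq (bS b0 ++ bS b1).
  by move: (perm_uniq H5); rewrite Hues /= catA cat_uniq => /andP [].
have Hsub : {subset bS b0 ++ bS b1 <= es}.
  by move=> x Hx; rewrite -(perm_mem H5) /= catA mem_cat Hx.
have Hcl : forall L : seq E, {subset L <= bS b0 ++ bS b1} ->
    forall e e', e \in L -> e' \in L -> conf e e' \/ conf e' e.
  move=> L HL; apply: (@clique2 L u1) => e /HL; rewrite mem_cat => /orP [He|He].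
    by exists (bg b0); split; [apply: P0| rewrite T0 E0 | ].
  by exists (bg b1); split; [apply: P1| rewrite T1 E1 eq_sym | ].
have Hbig : forall L : seq E, {subset L <= es} -> uniq L -> {subset L <= bS b0 ++ bS b1} ->
    minn (size es) a.+1 <= size L -> Goal es.
  move=> L HL HuL HL2 HsL; apply: (@goalL es L) => //.
  by apply: Hcl => x /mem_take /HL2.
move: H4 => /= /and3P [/andP [/eqP W0 _] /andP [/eqP W1 _] Hr].
clear Ezp F0 F1 L0 L1 N0 N1.
destruct rest as [|b2 rest].
  left; apply: (Hbig (bS b0 ++ bS b1)) => //.
  by rewrite -(perm_size H5) /= cats0 geq_minl.
case: (ltnP a (wt (bg b0) + wt (bg b1))) => Hw01.
  left; apply: (Hbig (bS b0 ++ bS b1)) => //.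
  by rewrite size_cat -W0 -W1; apply: leq_trans (geq_minr _ _) Hw01.
right.
have Hu02 : u0 != bu b2.
  rewrite /u0; move: H2 => /=; rewrite !inE; by case: (bu b0 == bu b2); rewrite ?orbT.
have Ht : tA (bg b0) != tA (bg b1) by rewrite T0 T1.
have [x [Hx _]] := Hconv _ _ Hw01 Ht (etrans E0 (esym E1)).
have [K1 K2 K3 K4 K5] := Hkap x.
exists ((inr x, bS b0 ++ bS b1, u0) :: b2 :: rest); split; last by [].
split => //.
- by move: H2 => /= /andP [] /[swap] /andP [] _ ->; rewrite !inE negb_or => /andP [_ ->].
- rewrite /zp /= cats1; apply/andP; split; last by move: Lr.
  rewrite /lk /link /= K3 K4 Hu02 andbT.
  by case: Hx => ->; rewrite /= T0 T1 /nx /u0 /= !eqxx ?orbT.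
- rewrite [all _ _]/=; apply/andP; split; last by [].
  rewrite /blockok /bg /bS /= size_cat -W0 -W1 K2 all_cat.
  apply/and3P; split.
  + by case: Hx => ->; rewrite //= addnC.
  + apply/allP => e He; apply: (connect_trans (P0 e He)); apply: connect1.
    by rewrite /childrel; case: Hx => ->; rewrite eqxx ?orbT.
  + apply/allP => e He; apply: (connect_trans (P1 e He)); apply: connect1.
    by rewrite /childrel; case: Hx => ->; rewrite eqxx ?orbT.
- by rewrite /= -catA.
Qed.


Lemma main_n es n : uniq es -> forall rep, size rep < n -> valid es rep -> Goal es.
Proof.
move=> Hues; elim: n => [//|n IH] rep Hs Hv.
case Ht: (true \in map fw (zp rep)); last first.
  apply: (backward _ _ Hues Hv); apply/allP => p Hp.
  by case Efw: (fw p) => //; have := map_f fw Hp; rewrite Efw Ht.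
case Hf: (false \in map fw (zp rep)); last first.
  apply: (forward _ _ Hues Hv); apply/allP => p Hp.
  by case Efw: (fw p) => //; have := map_f fw Hp; rewrite Efw Hf.
have [n0 [n1 [q Hq]]] := bool_rot _ Ht Hf.
have Hv1 : valid es (rot n1 (rot n0 rep)) by apply: valid_rot; apply: valid_rot.
have Hq' : map fw (zp (rot n1 (rot n0 rep))) = [:: true, false & q].
  by rewrite !zp_rot !map_rot.
have [//|[rep' [Hv' Hs']]] := sink _ _ _ Hues Hv1 Hq'.
apply: (IH rep') => //.
by move: Hs'; rewrite !size_rot => /leq_trans; apply.
Qed.


Lemma init es vs : (forall e, tl e != hd e) -> is_cycle V E tl hd vs es ->
  valid es (map (fun t => ((inl t.1, [:: t.1], t.2.1) : Block)) (zip es (zip vs (rot 1 vs)))).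
Proof.
move=> Hl [H1 H2 H3 H4 H5].
set Z := zip es (zip vs (rot 1 vs)).
have Sz : size Z = size es by rewrite /Z !size_zip size_rot H2 !minnn.
have E1 : map (fun t => t.2.1) Z = vs.
  have -> : (fun t : E * (V * V) => t.2.1) = fst \o snd by [].
  by rewrite map_comp /Z !map_snd_zip ?map_fst_zip // ?size_zip ?size_rot ?H2 ?minnn.
have E2 : map (fun t => t.2.2) Z = rot 1 vs.
  have -> : (fun t : E * (V * V) => t.2.2) = snd \o snd by [].
  by rewrite map_comp /Z !map_snd_zip // ?size_zip ?size_rot ?H2 ?minnn.
have E3 : map fst Z = es by rewrite /Z map_fst_zip // size_zip size_rot H2 minnn.
split.
- by rewrite size_map Sz.
- by rewrite -map_comp E1.
- rewrite /zp -map_comp E1 -E2 zip_map2 all_map.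
  apply/allP => t Ht; move/allP: H5 => /(_ t Ht) /=.
  rewrite /lk /link /bg /bu /=.
  case: t Ht => e [u v] Ht /= J; rewrite /joins in J; rewrite J /=.
  by move: J (Hl e) => /orP [/andP [/eqP -> /eqP ->]|/andP [/eqP -> /eqP ->]] //; rewrite eq_sym.
- by rewrite all_map; apply/allP => t _; rewrite /blockok /= andbT /preceq connect0.
- by rewrite -map_comp; rewrite (flatten_single _ _ fst) E3.
Qed.

Lemma thm_sec N (c : E -> 'I_N) : (forall e, tl e != hd e) ->
  (forall e1 e2, e1 != e2 -> conf e1 e2 -> c e1 != c e2) ->
  forall vs es, is_cycle V E tl hd vs es -> minn (size es) a.+1 <= size (undup (map c es)).
Proof.
move=> Hl Hc vs es Hcy.
have Hues : uniq es by case: Hcy.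
have Hv := init es vs Hl Hcy.
have Hs : size (map (fun t => ((inl t.1, [:: t.1], t.2.1) : Block)) (zip es (zip vs (rot 1 vs)))) < (size es).+1.
  by rewrite size_map !size_zip size_rot; case: Hcy => _ -> _ _ _; rewrite !minnn.
have [L [HuL HsL HmL HpL]] := main_n es (size es).+1 Hues _ Hs Hv.
apply: (leq_trans HmL).
have Hinj : {in L &, injective c}.
  move=> e e' He He' Hce; apply/eqP; apply/negPn/negP => Hne.
  case: (HpL e e' He He') => Hcf.
    by move: (Hc e e' Hne Hcf); rewrite Hce eqxx.
  have Hne' : e' != e by rewrite eq_sym.
  by move: (Hc e' e Hne' Hcf); rewrite Hce eqxx.
rewrite -(size_map c) (uniq_leq_size (s2 := undup (map c es))) //.
  by rewrite (map_inj_in_uniq Hinj).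
by move=> y /mapP [x Hx ->]; rewrite mem_undup map_f // HsL.
Qed.

End Main.

Theorem mainTheorem9
  (V E X : finType) (tl hd : E -> V) (tlX hdX : X -> V) (wX : X -> nat)
  (kap : X -> ((E + X) * (E + X))%type) (a N : nat) (c : E -> 'I_N) :
  (forall e : E, tl e != hd e) ->
  0 < a ->
  @is_fraternal_completion V E X tl hd tlX hdX wX kap a ->
  (forall e1 e2 : E, e1 != e2 ->
     @conflict V E X tl hd tlX hdX kap a e1 e2 -> c e1 != c e2) ->
  forall (vs : seq V) (es : seq E), @is_cycle V E tl hd vs es ->
    minn (size es) a.+1 <= size (undup (map c es)).
Proof.
move=> Hl Ha [Hw [Hk Hconv]] Hc vs es Hcy.
have Hw' : forall x : X, 0 < wX x by move=> x; case/andP: (Hw x) => /ltnW.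
exact: (@thm_sec V E X tl hd tlX hdX wX kap a Ha Hw' Hk Hconv N c Hl Hc vs es Hcy).
Qed.
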